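(* Let $D_1$ be an $m\times m$ spherical Euclidean distance matrix (EDM) generated by points that lie on a hypersphere of radius $\rho_1$, and let $D_2$ be an $n\times n$ spherical EDM generated by points that lie on a hypersphere of radius $\rho_2$. Then $D = E_m\otimes D_2 + D_1\otimes E_n$ is a spherical EDM generated by points that lie on a hypersphere of radius $\rho = (\rho_1^2+\rho_2^2)^{1/2}$. Here $E_k$ is the $k\times k$ all-ones matrix and $\otimes$ is the Kronecker product.
   Context: An $N\times N$ matrix $D=(d_{ij})$ is a Euclidean distance matrix (EDM) if there exist points $p^1,\dots,p^N$ in some Euclidean space with $d_{ij}=\|p^i-p^j\|^2$ for all $i,j$; the dimension of their affine span is the embedding dimension $r$ of $D$. An EDM is spherical if it is generated by points lying on a hypersphere. Convention: the generating points of an EDM of embedding dimension $r$ are taken in $\mathbb{R}^r$ (so they affinely span $\mathbb{R}^r$), and the hypersphere is a hypersphere in $\mathbb{R}^r$; its radius is then uniquely determined by the matrix. *)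

(* Defs.v *)
From HB Require Import structures.
From mathcomp Require Import all_boot all_order all_algebra.
From mathcomp Require Export mxtens.
Set Implicit Arguments. Unset Strict Implicit. Unset Printing Implicit Defensive.
Import Order.TTheory GRing.Theory Num.Theory.
Local Open Scope ring_scope.

Definition sqdist (R : numDomainType) (k : nat) (u v : 'rV[R]_k) : R :=
  \sum_(l < k) (u 0 l - v 0 l) ^+ 2.

Definition generates_EDM (R : numDomainType) (N k : nat)
  (D : 'M[R]_N) (p : 'I_N -> 'rV[R]_k) : Prop :=
  forall i j, D i j = sqdist (p i) (p j).

(* The points p^1..p^N affinely span R^k: the linear span of all the
   differences p^i - p^j (the direction space of the affine hull) is
   k-dimensional. *)
Definition affinely_spans (R : fieldType) (N k : nat) (p : 'I_N -> 'rV[R]_k) : Prop :=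
  \rank (\sum_(i < N) \sum_(j < N) <<p i - p j>>)%MS = k.

Definition is_EDM (R : numFieldType) (N : nat) (D : 'M[R]_N) : Prop :=
  exists (k : nat) (p : 'I_N -> 'rV[R]_k), generates_EDM D p.

(* Following the stated convention, the generating points are taken in
   R^r, r = embedding dimension (so they affinely span R^r), and the
   hypersphere (center c, radius rho >= 0) lies in R^r. *)
Definition spherical_EDM_radius (R : numFieldType) (N : nat) (D : 'M[R]_N)
  (rho : R) : Prop :=
  0 <= rho /\
  exists (r : nat) (p : 'I_N -> 'rV[R]_r) (c : 'rV[R]_r),
    [/\ generates_EDM D p, affinely_spans p &
        forall i, sqdist (p i) c = rho ^+ 2].

Definition Eones (R : pzRingType) (k : nat) : 'M[R]_k := const_mx 1.

(* Main.v *)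
Require Import Defs.
From HB Require Import structures.
From mathcomp Require Import all_boot all_order all_algebra.
From mathcomp Require Import mxtens.
Import Order.TTheory GRing.Theory Num.Theory.
Local Open Scope ring_scope.

Lemma sqdist_row (R : numDomainType) a b (u1 v1 : 'rV[R]_a) (u2 v2 : 'rV[R]_b) :
  sqdist (row_mx u1 u2) (row_mx v1 v2) = sqdist u1 v1 + sqdist u2 v2.
Proof.
rewrite /sqdist big_split_ord /=; congr (_ + _); apply: eq_bigr => l _;
  by rewrite ?row_mxEl ?row_mxEr.
Qed.

Lemma sums_mul_sub (F : fieldType) (I : finType) n p q (A : I -> 'M[F]_n)
  (L : 'M_(n, p)) (S : 'M_(q, p)) :
  (forall i, (A i *m L <= S)%MS) -> ((\sum_i A i)%MS *m L <= S)%MS.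
Proof.
move=> H; apply: (big_ind (fun X : 'M_n => (X *m L <= S)%MS)) => //.
- by rewrite mul0mx sub0mx.
- by move=> X Y hX hY; rewrite (addsmxMr X Y L) addsmx_sub hX.
Qed.

Lemma unindex_lt (m n : nat) (k : 'I_(m * n)) : (0 < m)%N && (0 < n)%N.
Proof.
have h1 := ltn_ord (mxtens_unindex k).1; have h2 := ltn_ord (mxtens_unindex k).2.
by rewrite (leq_ltn_trans _ h1) // (leq_ltn_trans _ h2).
Qed.

Theorem theorem5 (R : rcfType) (m n : nat) (D1 : 'M[R]_m) (D2 : 'M[R]_n)
    (rho1 rho2 : R) :
  spherical_EDM_radius D1 rho1 ->
  spherical_EDM_radius D2 rho2 ->
  spherical_EDM_radius (tensmx (Eones R m) D2 + tensmx D1 (Eones R n))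
    (Num.sqrt (rho1 ^+ 2 + rho2 ^+ 2)).
Proof.
move=> [r1p [r1 [p1 [c1 [g1 s1 h1]]]]] [r2p [r2 [p2 [c2 [g2 s2 h2]]]]].
split; first exact: sqrtr_ge0.
case: (boolP ((0 < m)%N && (0 < n)%N)) => [/andP [m0 n0] | mn0]; last first.
  exists 0%N, (fun _ => 0), 0; split.
  - move=> i; case/negP: mn0; exact: (@unindex_lt m n i).
  - by apply/eqP; rewrite eqn_leq rank_leq_col.
  - move=> i; case/negP: mn0; exact: (@unindex_lt m n i).
set q := fun k : 'I_(m * n) =>
  row_mx (p1 (mxtens_unindex k).1) (p2 (mxtens_unindex k).2).
exists (r1 + r2)%N, q, (row_mx c1 c2); split.
- move=> i j; rewrite /q sqdist_row -g1 -g2 /Eones !mxE.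
  by rewrite mul1r mulr1 addrC.
- set S := (\sum_(i < m * n) \sum_(j < m * n) <<q i - q j>>)%MS.
  have qsub : forall i j, (q i - q j <= S)%MS.
    move=> i j; apply: (submx_trans _ (sumsmx_sup i _ _)) => //.
    apply: (submx_trans _ (sumsmx_sup j _ _)) => //.
    by rewrite genmxE.
  pose i0 : 'I_m := Ordinal m0; pose j0 : 'I_n := Ordinal n0.
  pose L1 : 'M[R]_(r1, r1 + r2) := row_mx 1%:M 0.
  pose L2 : 'M[R]_(r2, r1 + r2) := row_mx 0 1%:M.
  have HL1 : (L1 <= S)%MS.
    have f1 : (1%:M <= \sum_(i < _) \sum_(j < _) <<p1 i - p1 j>>)%MS.
      by rewrite sub1mx; apply/eqP; exact: s1.
    have : (1%:M *m L1 <= S)%MS.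
      apply: submx_trans (submxMr L1 f1) _.
        apply: sums_mul_sub => i; apply: sums_mul_sub => k.
        rewrite (eqmxMr L1 (genmxE _)).
        have -> : (p1 i - p1 k) *m L1 =
          q (mxtens_index (i, j0)) - q (mxtens_index (k, j0)).
          by rewrite /q !mxtens_indexK /= mul_mx_row mulmx1 mulmx0 opp_row_mx add_row_mx subrr.
        exact: qsub.
    by rewrite mul1mx.
  have HL2 : (L2 <= S)%MS.
    have f2 : (1%:M <= \sum_(i < _) \sum_(j < _) <<p2 i - p2 j>>)%MS.
      by rewrite sub1mx; apply/eqP; exact: s2.
    have : (1%:M *m L2 <= S)%MS.
      apply: submx_trans (submxMr L2 f2) _.
        apply: sums_mul_sub => j; apply: sums_mul_sub => l.
        rewrite (eqmxMr L2 (genmxE _)).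
        have -> : (p2 j - p2 l) *m L2 =
          q (mxtens_index (i0, j)) - q (mxtens_index (i0, l)).
          by rewrite /q !mxtens_indexK /= mul_mx_row mulmx1 mulmx0 opp_row_mx add_row_mx subrr.
        exact: qsub.
    by rewrite mul1mx.
  have : (1%:M <= S)%MS.
    by rewrite scalar_mx_block -[block_mx _ _ _ _]/(col_mx L1 L2) col_mx_sub HL1.
  by rewrite sub1mx => /eqP.
- move=> k; rewrite /q sqdist_row h1 h2 sqr_sqrtr //.
  by rewrite addr_ge0 // sqr_ge0.
Qed.
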